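(* Let $d_i>0$ for all $i$, $\mathbf{P}\in\mathbb{Z}_{\ge0}^N$ with $P_N>0$, $\mathbf{L}\in\mathbb{R}^{N\times M}$ with non-negative entries and $L_{N,j}>0$ for all $j$, and $\gamma>0$. Let $\tilde{\boldsymbol\alpha}$ be the unique maximizer on the non-negative orthant of $S(\boldsymbol\alpha)=l(\boldsymbol\alpha)-\gamma\|\boldsymbol\alpha\|_2^2$. Then $\tilde{\boldsymbol\alpha}$ is a fixed point of the map $$\mathbf{T}_\gamma(\boldsymbol\alpha)_j=\frac{\big(\mathbf{L}^T(\mathbf{d}\odot e^{-\mathbf{L}\boldsymbol\alpha})\big)_j}{(\mathbf{L}^T\mathbf{P})_j+2\gamma\alpha_j}\,\alpha_j,\qquad j=1,\dots,M.$$ Moreover, if $\boldsymbol\alpha^{(0)}$ is strictly positive then all iterates $\boldsymbol\alpha^{(n+1)}=\mathbf{T}_\gamma(\boldsymbol\alpha^{(n)})$ are strictly positive, a strictly positive fixed point of $\mathbf{T}_\gamma$ is the maximizer of $S$, and if the iterates converge then their limit is the maximizer of $S$ on the non-negative orthant.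
   Context: $l(\boldsymbol\alpha)=\sum_{i=1}^N\big(P_i\log d_i-(\mathbf{L}\boldsymbol\alpha)_iP_i-d_i e^{-(\mathbf{L}\boldsymbol\alpha)_i}-\log(P_i!)\big)$ for $\boldsymbol\alpha\ge0$ (Poisson log-likelihood of the discretized Raman lidar model). $\odot$ denotes the componentwise product and $e^{-\mathbf{L}\boldsymbol\alpha}$ is taken componentwise. *)

(* Defs.v *)
From Stdlib Require Import Reals Lra Lia Arith Factorial.
Open Scope R_scope.

(* Vectors in R^n are functions nat -> R, only indices 0..n-1 matter.
   Matrix L in R^{N x M} : nat -> nat -> R, entry (i,j), 0-based. *)

Fixpoint rsum (n : nat) (f : nat -> R) : R :=
  match n with
  | O => 0
  | S k => rsum k f + f k
  end.

Definition Lmul (M : nat) (L : nat -> nat -> R) (a : nat -> R) (i : nat) : R :=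
  rsum M (fun j => L i j * a j).

(* Poisson log-likelihood l(alpha) *)
Definition loglik (N M : nat) (d : nat -> R) (P : nat -> nat)
  (L : nat -> nat -> R) (a : nat -> R) : R :=
  rsum N (fun i => INR (P i) * ln (d i) - Lmul M L a i * INR (P i)
                   - d i * exp (- Lmul M L a i) - ln (INR (fact (P i)))).

Definition Sobj (N M : nat) (d : nat -> R) (P : nat -> nat)
  (L : nat -> nat -> R) (gamma : R) (a : nat -> R) : R :=
  loglik N M d P L a - gamma * rsum M (fun j => a j ^ 2).

Definition Tgamma (N M : nat) (d : nat -> R) (P : nat -> nat)
  (L : nat -> nat -> R) (gamma : R) (a : nat -> R) (j : nat) : R :=
  rsum N (fun i => L i j * (d i * exp (- Lmul M L a i)))
  / (rsum N (fun i => L i j * INR (P i)) + 2 * gamma * a j) * a j.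

Definition nonneg (M : nat) (a : nat -> R) : Prop :=
  forall j, (j < M)%nat -> 0 <= a j.

Definition posvec (M : nat) (a : nat -> R) : Prop :=
  forall j, (j < M)%nat -> 0 < a j.

Definition is_max_S (N M : nat) (d : nat -> R) (P : nat -> nat)
  (L : nat -> nat -> R) (gamma : R) (a : nat -> R) : Prop :=
  nonneg M a /\
  forall b, nonneg M b -> Sobj N M d P L gamma b <= Sobj N M d P L gamma a.

(* Main.v *)
Require Import Defs.
From Stdlib Require Import Reals Lra Lia Factorial FunctionalExtensionality.
From Coquelicot Require Import Coquelicot.
Open Scope R_scope.

Lemma rsum_ext n f g : (forall k, (k < n)%nat -> f k = g k) -> rsum n f = rsum n g.
Proof. induction n; simpl; intros H; auto. rewrite IHn by (intros; apply H; lia). rewrite H by lia. auto. Qed.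

Lemma rsum_plus n f g : rsum n (fun k => f k + g k) = rsum n f + rsum n g.
Proof. induction n; simpl; [ring|rewrite IHn; ring]. Qed.

Lemma rsum_minus n f g : rsum n (fun k => f k - g k) = rsum n f - rsum n g.
Proof. induction n; simpl; [ring|rewrite IHn; ring]. Qed.

Lemma rsum_scal n c f : rsum n (fun k => c * f k) = c * rsum n f.
Proof. induction n; simpl; [ring|rewrite IHn; ring]. Qed.

Lemma rsum_le n f g : (forall k, (k < n)%nat -> f k <= g k) -> rsum n f <= rsum n g.
Proof. induction n; simpl; intros H; [lra|]. assert (H1 := H n ltac:(lia)). assert (rsum n f <= rsum n g) by (apply IHn; intros; apply H; lia). lra. Qed.

Lemma rsum_swap n m F : rsum n (fun i => rsum m (fun j => F i j)) = rsum m (fun j => rsum n (fun i => F i j)).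
Proof. induction n; simpl. - induction m; simpl; [auto|rewrite <- IHm; ring].
 - rewrite IHn. rewrite <- rsum_plus. auto. Qed.

Lemma rsum_ge_term n f k0 : (forall k, (k < n)%nat -> 0 <= f k) -> (k0 < n)%nat -> f k0 <= rsum n f.
Proof. induction n; simpl; intros H Hk; [lia|].
 assert (0 <= rsum n f) by (clear IHn Hk; induction n; simpl; [lra| assert (0 <= f n) by (apply H; lia); assert (0 <= rsum n f) by (apply IHn; intros; apply H; lia); lra]).
 destruct (Nat.eq_dec k0 n). subst. lra. assert (f k0 <= rsum n f) by (apply IHn; [intros; apply H; lia|lia]). assert (0 <= f n) by (apply H; lia). lra. Qed.

Lemma rsum_if n j h f : (j < n)%nat -> rsum n (fun k => if Nat.eqb k j then h k else f k) = rsum n f + (h j - f j).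
Proof. induction n; simpl; intros Hj; [lia|].
 destruct (Nat.eq_dec j n).
 - subst. rewrite Nat.eqb_refl. rewrite (rsum_ext n _ f). ring. intros k Hk. destruct (Nat.eqb_spec k n); [lia|auto].
 - rewrite IHn by lia. destruct (Nat.eqb_spec n j); [lia|]. ring. Qed.

Definition upd (a : nat -> R) j x k := if Nat.eqb k j then x else a k.

Lemma rsum_upd_lin m c a j x : (j < m)%nat -> rsum m (fun k => c k * upd a j x k) = rsum m (fun k => c k * a k) + c j * (x - a j).
Proof. intros Hj. rewrite (rsum_ext m _ (fun k => if Nat.eqb k j then c k * x else c k * a k)).
 rewrite rsum_if by auto. ring. intros k _. unfold upd. destruct (Nat.eqb k j); auto. Qed.

Lemma rsum_upd_sq m a j x : (j < m)%nat -> rsum m (fun k => upd a j x k ^ 2) = rsum m (fun k => a k ^ 2) + (x ^ 2 - a j ^ 2).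
Proof. intros Hj. rewrite (rsum_ext m _ (fun k => if Nat.eqb k j then x ^ 2 else a k ^ 2)).
 rewrite rsum_if by auto. ring. intros k _. unfold upd. destruct (Nat.eqb k j); auto. Qed.

Lemma rsum_deriv n (f : nat -> R -> R) g x : (forall k, (k < n)%nat -> derivable_pt_lim (f k) x (g k)) ->
  derivable_pt_lim (fun t => rsum n (fun k => f k t)) x (rsum n g).
Proof. induction n; simpl; intros H.
 - apply derivable_pt_lim_const.
 - apply (derivable_pt_lim_plus (fun t => rsum n (fun k => f k t)) (f n)). apply IHn; intros; apply H; lia. apply H; lia. Qed.

Lemma deriv_max0 F l : derivable_pt_lim F 0 l -> (exists del, 0 < del /\ forall t, Rabs t < del -> F t <= F 0) -> l = 0.
Proof. intros Hd [del [Hdel Hm]].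
 destruct (Rtotal_order l 0) as [Hl|[Hl|Hl]]; auto; exfalso.
 - destruct (Hd (- l) ltac:(lra)) as [[dl Hdl] Hh]. simpl in Hh.
   set (h := - Rmin del dl / 2).
   assert (0 < Rmin del dl) by (apply Rmin_glb_lt; auto).
   assert (Rmin del dl <= del) by apply Rmin_l. assert (Rmin del dl <= dl) by apply Rmin_r.
   assert (Ha : Rabs h = Rmin del dl / 2) by (unfold h; rewrite Rabs_left; lra).
   specialize (Hh h ltac:(unfold h; lra) ltac:(lra)). specialize (Hm h ltac:(lra)).
   rewrite Rplus_0_l in Hh. apply Rabs_def2 in Hh. destruct Hh as [Hx1 Hx2].
   assert (h < 0) by (unfold h; lra).
   assert ((F h - F 0) / h >= 0). { unfold Rdiv. replace ((F h - F 0) * / h) with ((F 0 - F h) * / - h) by (field; lra).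
     apply Rle_ge, Rmult_le_pos. lra. left; apply Rinv_0_lt_compat; lra. } lra.
 - destruct (Hd l ltac:(lra)) as [[dl Hdl] Hh]. simpl in Hh.
   set (h := Rmin del dl / 2).
   assert (0 < Rmin del dl) by (apply Rmin_glb_lt; auto).
   assert (Rmin del dl <= del) by apply Rmin_l. assert (Rmin del dl <= dl) by apply Rmin_r.
   assert (Ha : Rabs h = Rmin del dl / 2) by (unfold h; rewrite Rabs_right; lra).
   specialize (Hh h ltac:(unfold h; lra) ltac:(lra)). specialize (Hm h ltac:(lra)).
   rewrite Rplus_0_l in Hh. apply Rabs_def2 in Hh. destruct Hh as [Hx1 Hx2].
   assert (0 < h) by (unfold h; lra).
   assert ((F h - F 0) / h <= 0). { unfold Rdiv. replace ((F h - F 0) * / h) with (- ((F 0 - F h) * / h)) by (field; lra).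
     assert (0 <= (F 0 - F h) * / h). apply Rmult_le_pos. lra. left; apply Rinv_0_lt_compat; lra. lra. } lra.
Qed.

Lemma cv_const c : Un_cv (fun _ => c) c.
Proof. intros e He. exists O. intros. unfold Rdist. rewrite Rminus_diag, Rabs_R0. auto. Qed.

Lemma rsum_cv m (F : nat -> nat -> R) G : (forall k, (k < m)%nat -> Un_cv (fun n => F n k) (G k)) ->
  Un_cv (fun n => rsum m (F n)) (rsum m G).
Proof. induction m; simpl; intros H. apply cv_const.
 apply (CV_plus (fun n => rsum m (F n)) (fun n => F n m)). apply IHm; intros; apply H; lia. apply H; lia. Qed.

Lemma cv_shift u l : Un_cv u l -> Un_cv (fun n => u (S n)) l.
Proof. intros H e He. destruct (H e He) as [N HN]. exists N. intros. apply HN. lia. Qed.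

Lemma cv_ge u l c n0 : Un_cv u l -> (forall n, (n >= n0)%nat -> c <= u n) -> c <= l.
Proof. intros H Hc. destruct (Rle_lt_dec c l); auto. exfalso.
 destruct (H (c - l) ltac:(lra)) as [N HN]. specialize (HN (Nat.max N n0) ltac:(lia)).
 specialize (Hc (Nat.max N n0) ltac:(lia)). unfold Rdist in HN. apply Rabs_def2 in HN. lra. Qed.

Lemma cv_gt_ev u l c : Un_cv u l -> c < l -> exists n0, forall n, (n >= n0)%nat -> c < u n.
Proof. intros H Hc. destruct (H (l - c) ltac:(lra)) as [N HN]. exists N. intros n Hn.
 specialize (HN n Hn). unfold Rdist in HN. apply Rabs_def2 in HN. lra. Qed.

Lemma cv_exp_neg u l : Un_cv u l -> Un_cv (fun n => exp (- u n)) (exp (- l)).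
Proof. intros H. apply (continuity_seq exp (fun n => - u n)). apply derivable_continuous_pt, derivable_pt_exp.
 apply (CV_opp u l H). Qed.

Lemma cv_inv u l : Un_cv u l -> l <> 0 -> Un_cv (fun n => / u n) (/ l).
Proof. intros H Hl. apply (continuity_seq (fun x => / x) u l). 
 apply (continuity_pt_inv (fun x => x)). apply continuity_pt_id. auto. auto. Qed.

Definition numj N M d (L : nat -> nat -> R) a j := rsum N (fun i => L i j * (d i * exp (- Lmul M L a i))).
Definition denj N (P : nat -> nat) (L : nat -> nat -> R) gamma (a : nat -> R) j := rsum N (fun i => L i j * INR (P i)) + 2 * gamma * a j.

Lemma concave N M d P L gamma a b : (forall i, (i < N)%nat -> 0 < d i) -> 0 <= gamma ->
  Sobj N M d P L gamma b - Sobj N M d P L gamma a <=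
  rsum M (fun j => (numj N M d L a j - denj N P L gamma a j) * (b j - a j)).
Proof. intros Hd Hg. unfold Sobj, loglik.
 set (w := fun i => d i * exp (- Lmul M L a i) - INR (P i)).
 assert (H1 : rsum N (fun i => INR (P i) * ln (d i) - Lmul M L b i * INR (P i) - d i * exp (- Lmul M L b i) - ln (INR (fact (P i))))
    - rsum N (fun i => INR (P i) * ln (d i) - Lmul M L a i * INR (P i) - d i * exp (- Lmul M L a i) - ln (INR (fact (P i))))
    <= rsum N (fun i => (Lmul M L b i - Lmul M L a i) * w i)).
 { rewrite <- rsum_minus. apply rsum_le. intros i Hi. unfold w.
   assert (He : exp (- Lmul M L a i) * (1 + - (Lmul M L b i - Lmul M L a i)) <= exp (- Lmul M L b i)).
   { replace (- Lmul M L b i) with (- Lmul M L a i + - (Lmul M L b i - Lmul M L a i)) by ring.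
     rewrite exp_plus. apply Rmult_le_compat_l. left; apply exp_pos. apply exp_ineq1_le. }
   assert (0 < d i) by auto. apply (Rmult_le_compat_l (d i)) in He; [|lra].
   set (ea := exp (- Lmul M L a i)) in *. set (eb := exp (- Lmul M L b i)) in *. set (x := Lmul M L b i - Lmul M L a i) in *.
   replace (Lmul M L b i) with (x + Lmul M L a i) by (unfold x; ring).
   match goal with |- ?A <= ?B => assert (B - A = d i * eb - d i * (ea * (1 + - x))) by ring end. lra. }
 assert (H2 : rsum M (fun j => b j ^ 2) - rsum M (fun j => a j ^ 2) >= rsum M (fun j => 2 * a j * (b j - a j))).
 { rewrite <- rsum_minus. apply Rle_ge, rsum_le. intros k _. assert (0 <= (b k - a k)^2) by apply pow2_ge_0. nra. }
 assert (H3 : rsum N (fun i => (Lmul M L b i - Lmul M L a i) * w i) =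
    rsum M (fun j => (b j - a j) * rsum N (fun i => L i j * w i))).
 { unfold Lmul. rewrite (rsum_ext N _ (fun i => rsum M (fun j => L i j * (b j - a j) * w i))).
   rewrite rsum_swap. apply rsum_ext. intros j _. rewrite <- rsum_scal. apply rsum_ext. intros; ring.
   intros i _. rewrite <- rsum_minus. rewrite Rmult_comm, <- rsum_scal. apply rsum_ext. intros; ring. }
 assert (H4 : rsum M (fun j => (numj N M d L a j - denj N P L gamma a j) * (b j - a j)) =
    rsum M (fun j => (b j - a j) * rsum N (fun i => L i j * w i)) - gamma * rsum M (fun j => 2 * a j * (b j - a j))).
 { rewrite <- rsum_scal, <- rsum_minus. apply rsum_ext. intros j _. unfold numj, denj, w.
   rewrite (rsum_ext N (fun i => L i j * (d i * exp (- Lmul M L a i) - INR (P i))) (fun i => L i j * (d i * exp (- Lmul M L a i)) - L i j * INR (P i))).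
   rewrite rsum_minus. ring. intros; ring. }
 rewrite H4. rewrite <- H3. nra.
Qed.

Lemma rsum_zero n : rsum n (fun _ => 0) = 0.
Proof. induction n; simpl; [auto|rewrite IHn; ring]. Qed.

Lemma Sobj_ext N M d P L gamma a b : (forall k, (k < M)%nat -> a k = b k) ->
  Sobj N M d P L gamma a = Sobj N M d P L gamma b.
Proof. intros H. unfold Sobj, loglik, Lmul.
 rewrite (rsum_ext M (fun j => a j ^ 2) (fun j => b j ^ 2)) by (intros; rewrite H; auto).
 f_equal. apply rsum_ext. intros i _.
 rewrite (rsum_ext M (fun j => L i j * a j) (fun j => L i j * b j)) by (intros; rewrite H; auto). auto. Qed.

Lemma kkt_max N M d P L gamma a : (forall i, (i < N)%nat -> 0 < d i) -> 0 <= gamma -> Defs.nonneg M a ->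
  (forall j, (j < M)%nat -> numj N M d L a j - denj N P L gamma a j <= 0 /\
       (numj N M d L a j - denj N P L gamma a j) * a j = 0) ->
  is_max_S N M d P L gamma a.
Proof. intros Hd Hg Ha Hk. split; auto. intros b Hb.
 assert (H := concave N M d P L gamma a b Hd Hg).
 assert (rsum M (fun j => (numj N M d L a j - denj N P L gamma a j) * (b j - a j)) <= rsum M (fun _ => 0)).
 { apply rsum_le. intros j Hj. destruct (Hk j Hj) as [H1 H2]. specialize (Hb j Hj).
   assert ((numj N M d L a j - denj N P L gamma a j) * b j <= 0).
   { apply Rmult_le_0_r; lra. } nra. }
 rewrite rsum_zero in H0. lra. Qed.

Lemma den_pos N M P L gamma a j : (0 < N)%nat -> (0 < P (N - 1)%nat)%nat ->
  (forall i j, (i < N)%nat -> (j < M)%nat -> 0 <= L i j) -> (forall j, (j < M)%nat -> 0 < L (N - 1)%nat j) ->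
  0 < gamma -> (j < M)%nat -> 0 <= a j -> 0 < denj N P L gamma a j.
Proof. intros HN HP HL HLN Hg Hj Ha. unfold denj.
 assert (L (N-1)%nat j * INR (P (N-1)%nat) <= rsum N (fun i => L i j * INR (P i))).
 { apply (rsum_ge_term N (fun i => L i j * INR (P i))). intros. apply Rmult_le_pos; auto. apply pos_INR. lia. }
 assert (0 < L (N-1)%nat j * INR (P (N-1)%nat)). { apply Rmult_lt_0_compat; auto. apply lt_0_INR. auto. }
 nra. Qed.

Lemma num_pos N M d L a j : (0 < N)%nat -> (forall i, (i < N)%nat -> 0 < d i) ->
  (forall i j, (i < N)%nat -> (j < M)%nat -> 0 <= L i j) -> (forall j, (j < M)%nat -> 0 < L (N - 1)%nat j) ->
  (j < M)%nat -> 0 < numj N M d L a j.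
Proof. intros HN Hd HL HLN Hj. unfold numj.
 eapply Rlt_le_trans; [|apply (rsum_ge_term N (fun i => L i j * (d i * exp (- Lmul M L a i))) (N-1)%nat)].
 - apply Rmult_lt_0_compat; auto. apply Rmult_lt_0_compat. apply Hd; lia. apply exp_pos.
 - intros. apply Rmult_le_pos; auto. apply Rmult_le_pos. left; auto. left; apply exp_pos.
 - lia. Qed.

Lemma Tg_eq N M d P L gamma a j : Tgamma N M d P L gamma a j = numj N M d L a j / denj N P L gamma a j * a j.
Proof. reflexivity. Qed.

Lemma max_grad N M d P L gamma a j : (forall i, (i < N)%nat -> 0 < d i) -> is_max_S N M d P L gamma a -> (j < M)%nat -> 0 < a j ->
  numj N M d L a j - denj N P L gamma a j = 0.
Proof. intros Hd [Ha Hm] Hj Haj.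
 set (F := fun t => rsum N (fun i => INR (P i) * ln (d i) - (Lmul M L a i + t * L i j) * INR (P i) - d i * exp (- (Lmul M L a i + t * L i j)) - ln (INR (fact (P i)))) - gamma * (rsum M (fun k => a k ^ 2) + ((a j + t) ^ 2 - a j ^ 2))).
 assert (HF : forall t, Sobj N M d P L gamma (upd a j (a j + t)) = F t).
 { intros t. unfold Sobj, loglik, F. rewrite rsum_upd_sq by auto. f_equal. apply rsum_ext. intros i _.
   unfold Lmul. rewrite rsum_upd_lin by auto. replace (L i j * (a j + t - a j)) with (t * L i j) by ring. auto. }
 assert (HF0 : F 0 = Sobj N M d P L gamma a).
 { rewrite <- HF. apply Sobj_ext. intros k _. unfold upd. destruct (Nat.eqb_spec k j); subst; auto; ring. }
 set (l := rsum N (fun i => - L i j * INR (P i) + d i * exp (- Lmul M L a i) * L i j) - gamma * (2 * a j)).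
 assert (Hd' : derivable_pt_lim F 0 l).
 { unfold F, l. apply (derivable_pt_lim_minus (fun t => rsum N (fun i => INR (P i) * ln (d i) - (Lmul M L a i + t * L i j) * INR (P i) - d i * exp (- (Lmul M L a i + t * L i j)) - ln (INR (fact (P i))))) (fun t => gamma * (rsum M (fun k => a k ^ 2) + ((a j + t) ^ 2 - a j ^ 2)))).
   - apply (rsum_deriv N (fun i t => INR (P i) * ln (d i) - (Lmul M L a i + t * L i j) * INR (P i) - d i * exp (- (Lmul M L a i + t * L i j)) - ln (INR (fact (P i))))).
     intros i _. apply is_derive_Reals. auto_derive. auto. replace (Lmul M L a i + 0 * L i j) with (Lmul M L a i) by ring. ring.
   - apply is_derive_Reals. auto_derive. auto. ring. }
 assert (Hl : l = 0).
 { apply (deriv_max0 F l Hd'). exists (a j). split; auto. intros t Ht. rewrite HF0, <- HF. apply Hm.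
   intros k Hk. unfold upd. destruct (Nat.eqb k j). apply Rabs_def2 in Ht. lra. apply Ha; auto. }
 rewrite <- Hl. unfold l, numj, denj.
 rewrite (rsum_ext N (fun i => - L i j * INR (P i) + d i * exp (- Lmul M L a i) * L i j) (fun i => L i j * (d i * exp (- Lmul M L a i)) - L i j * INR (P i))) by (intros; ring).
 rewrite rsum_minus. ring. Qed.

Theorem mainTheorem4
  (N M : nat) (d : nat -> R) (P : nat -> nat) (L : nat -> nat -> R) (gamma : R)
  (atil : nat -> R)
  (HN : (0 < N)%nat)
  (Hd : forall i, (i < N)%nat -> 0 < d i)
  (HPN : (0 < P (N - 1)%nat)%nat)
  (HL : forall i j, (i < N)%nat -> (j < M)%nat -> 0 <= L i j)
  (HLN : forall j, (j < M)%nat -> 0 < L (N - 1)%nat j)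
  (Hgamma : 0 < gamma)
  (Hmax : is_max_S N M d P L gamma atil)
  (Huniq : forall b, is_max_S N M d P L gamma b ->
                     forall j, (j < M)%nat -> b j = atil j) :
  (forall j, (j < M)%nat -> Tgamma N M d P L gamma atil j = atil j) /\
  (forall a0 : nat -> R, posvec M a0 ->
     forall n, posvec M (Nat.iter n (Tgamma N M d P L gamma) a0)) /\
  (forall a : nat -> R, posvec M a ->
     (forall j, (j < M)%nat -> Tgamma N M d P L gamma a j = a j) ->
     forall j, (j < M)%nat -> a j = atil j) /\
  (forall (a0 astar : nat -> R), posvec M a0 ->
     (forall j, (j < M)%nat ->
        Un_cv (fun n => Nat.iter n (Tgamma N M d P L gamma) a0 j) (astar j)) ->
     forall j, (j < M)%nat -> astar j = atil j).
Proof.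
 assert (Hdp : forall a j, (j < M)%nat -> 0 <= a j -> 0 < denj N P L gamma a j).
 { intros. apply (den_pos N M); auto. }
 assert (Hnp : forall a j, (j < M)%nat -> 0 < numj N M d L a j).
 { intros. apply num_pos; auto. }
 assert (Hpos : forall a0 : nat -> R, posvec M a0 ->
     forall n, posvec M (Nat.iter n (Tgamma N M d P L gamma) a0)).
 { intros a0 Ha0 n. induction n; simpl; auto. intros j Hj. rewrite Tg_eq.
   specialize (IHn j Hj). apply Rmult_lt_0_compat; auto. apply Rdiv_lt_0_compat; auto.
   apply Hdp; auto; lra. }
 split; [|split; [exact Hpos|split]].
 - intros j Hj. destruct Hmax as [Hnn Hm]. rewrite Tg_eq.
   destruct (Rle_lt_dec (atil j) 0).
   + assert (atil j = 0) by (specialize (Hnn j Hj); lra). rewrite H. ring.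
   + assert (E := max_grad N M d P L gamma atil j Hd (conj Hnn Hm) Hj r).
     assert (0 < denj N P L gamma atil j) by (apply Hdp; auto; lra).
     replace (numj N M d L atil j) with (denj N P L gamma atil j) by lra. field. lra.
 - intros a Ha Hf. apply Huniq. apply kkt_max; auto. lra. intros j Hj; left; auto.
   intros j Hj. specialize (Hf j Hj). rewrite Tg_eq in Hf. specialize (Ha j Hj).
   assert (0 < denj N P L gamma a j) by (apply Hdp; auto; lra).
   assert (numj N M d L a j / denj N P L gamma a j = 1).
   { apply (Rmult_eq_reg_r (a j)). rewrite Hf. ring. lra. }
   assert (numj N M d L a j = denj N P L gamma a j).
   { unfold Rdiv in H0. apply (Rmult_eq_reg_r (/ denj N P L gamma a j)). rewrite H0. field. lra.
     apply Rinv_neq_0_compat. lra. }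
   split; rewrite H1; ring_simplify; lra.
 - intros a0 astar Ha0 Hcv.
   set (al := fun n => Nat.iter n (Tgamma N M d P L gamma) a0).
   assert (Hal : forall n k, (k < M)%nat -> 0 < al n k) by (intros; apply Hpos; auto).
   assert (Hcv' : forall k, (k < M)%nat -> Un_cv (fun n => al n k) (astar k)) by exact Hcv.
   assert (Hnn : forall k, (k < M)%nat -> 0 <= astar k).
   { intros k Hk. apply (cv_ge (fun n => al n k) (astar k) 0 0); auto. intros; left; auto. }
   assert (HLm : forall i, Un_cv (fun n => Lmul M L (al n) i) (Lmul M L astar i)).
   { intros i. unfold Lmul. apply (rsum_cv M (fun n k => L i k * al n k)). intros k Hk.
     apply CV_mult. apply cv_const. auto. }
   assert (Hrec : forall n k, al (S n) k = numj N M d L (al n) k / denj N P L gamma (al n) k * al n k).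
   { intros. reflexivity. }
   intros j Hj. apply Huniq; auto. apply kkt_max; auto; [lra|]. clear j Hj. intros j Hj.
   assert (Hnum : Un_cv (fun n => numj N M d L (al n) j) (numj N M d L astar j)).
   { unfold numj. apply (rsum_cv N (fun n i => L i j * (d i * exp (- Lmul M L (al n) i)))).
     intros i Hi. apply CV_mult. apply cv_const. apply CV_mult. apply cv_const. apply cv_exp_neg. auto. }
   assert (Hden : Un_cv (fun n => denj N P L gamma (al n) j) (denj N P L gamma astar j)).
   { unfold denj. apply CV_plus. apply cv_const. apply CV_mult. apply cv_const. auto. }
   assert (Hd0 : 0 < denj N P L gamma astar j) by (apply Hdp; auto).
   set (rs := numj N M d L astar j / denj N P L gamma astar j).
   assert (Hr : Un_cv (fun n => numj N M d L (al n) j / denj N P L gamma (al n) j) rs).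
   { unfold rs, Rdiv. apply CV_mult. auto. apply cv_inv. auto. lra. }
   assert (Hfix : rs * astar j = astar j).
   { apply (UL_sequence (fun n => al (S n) j)).
     - rewrite (functional_extensionality_dep _ _ (fun n => Hrec n j) : (fun n => al (S n) j) = _) .
       apply CV_mult; auto.
     - apply (cv_shift (fun n => al n j)). auto. }
   assert (Hnr : numj N M d L astar j = rs * denj N P L gamma astar j) by (unfold rs; field; lra).
   assert (Hz : (numj N M d L astar j - denj N P L gamma astar j) * astar j = 0).
   { rewrite Hnr. replace ((rs * denj N P L gamma astar j - denj N P L gamma astar j) * astar j)
       with (denj N P L gamma astar j * (rs * astar j - astar j)) by ring. rewrite Hfix. ring. }
   split; auto.
   destruct (Rle_lt_dec (numj N M d L astar j - denj N P L gamma astar j) 0) as [Hle|Hgt]; auto. exfalso.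
   assert (Hrs : 1 < rs).
   { rewrite Hnr in Hgt. assert (0 < (rs - 1) * denj N P L gamma astar j) by lra.
     destruct (Rle_lt_dec rs 1); auto. assert ((rs - 1) * denj N P L gamma astar j <= 0).
     apply Rmult_le_0_r; lra. lra. }
   assert (Ha0' : astar j = 0).
   { assert ((rs - 1) * astar j = 0) by lra. apply Rmult_integral in H. destruct H; lra. }
   destruct (cv_gt_ev _ _ 1 Hr Hrs) as [n0 Hn0].
   assert (Hinc : forall k, al n0 j <= al (n0 + k)%nat j).
   { induction k. rewrite Nat.add_0_r. lra. rewrite Nat.add_succ_r, Hrec.
     specialize (Hn0 (n0 + k)%nat ltac:(lia)). assert (0 < al (n0 + k)%nat j) by auto.
     assert (al (n0+k)%nat j <= numj N M d L (al (n0 + k)%nat) j / denj N P L gamma (al (n0 + k)%nat) j * al (n0 + k)%nat j).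
     { rewrite <- (Rmult_1_l (al (n0 + k)%nat j)) at 1. apply Rmult_le_compat_r; lra. } lra. }
   assert (al n0 j <= astar j).
   { apply (cv_ge (fun n => al n j) (astar j) (al n0 j) n0); auto. intros n Hn.
     replace n with (n0 + (n - n0))%nat by lia. auto. }
   specialize (Hal n0 j Hj). lra.
Qed.
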